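(* Let $c\ge 0$ and consider the planar polynomial system $$\dot x=x(1-y+cx),\qquad \dot y=y(-1+x).$$ The unique irreducible Darboux polynomials of this system with non-zero cofactors are $x$ and $y$.
   Context: For the vector field $\mathcal{Z}=x(1-y+cx)\partial_x+y(-1+x)\partial_y$, a Darboux polynomial is $f\in\mathbb{C}[x,y]$ with $\mathcal{Z}f=kf$ for some polynomial $k$ (the cofactor), necessarily of degree at most one. *)

(* Defs.v *)
(* Bivariate polynomials C[x,y] are represented as
   {poly {poly C}}: the outer variable is y, the inner variable is x. *)
From HB Require Import structures.
From mathcomp Require Import all_boot all_order all_algebra.
From mathcomp Require Import complex.
From mathcomp Require Import reals.
Set Implicit Arguments. Unset Strict Implicit. Unset Printing Implicit Defensive.
Import Order.TTheory GRing.Theory Num.Theory.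
Local Open Scope ring_scope.
Local Open Scope complex_scope.

Definition varx (C : nzRingType) : {poly {poly C}} := ('X)%:P.
Definition vary (C : nzRingType) : {poly {poly C}} := 'X.
Definition cst2 (C : nzRingType) (a : C) : {poly {poly C}} := a%:P%:P.

Definition dx (C : nzRingType) (f : {poly {poly C}}) : {poly {poly C}} :=
  map_poly (fun p : {poly C} => p^`()) f.
Definition dy (C : nzRingType) (f : {poly {poly C}}) : {poly {poly C}} := f^`().

Definition Zfield (R : realType) (c : R) (f : {poly {poly R[i]}}) : {poly {poly R[i]}} :=
  varx R[i] * (1 - vary R[i] + cst2 (c%:C) * varx R[i]) * dx f
  + vary R[i] * (-1 + varx R[i]) * dy f.

Definition darboux (R : realType) (c : R) (f k : {poly {poly R[i]}}) : Prop :=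
  f != 0 /\ Zfield c f = k * f.

Definition irreducible_elt (A : idomainType) (f : A) : Prop :=
  f != 0 /\ f \isn't a GRing.unit /\
  forall g h : A, f = g * h -> g \is a GRing.unit \/ h \is a GRing.unit.

(* Main.v *)
Require Import Defs.
From HB Require Import structures.
From mathcomp Require Import all_boot all_order all_algebra.
From mathcomp Require Import complex.
From mathcomp Require Import reals.
From mathcomp Require Import ring zify.
Import Order.TTheory GRing.Theory Num.Theory.
Local Open Scope ring_scope.
Local Open Scope complex_scope.

Lemma deriv_eq0_size (C : numDomainType) (p : {poly C}) :
  p^`() = 0 -> (size p <= 1)%N.
Proof.
move=> hd; apply/leq_sizeP => [[|j]] // _.
have := congr1 (fun q : {poly C} => q`_j) hd; rewrite /= coef_deriv coef0 => /eqP.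
by rewrite mulrn_eq0 /= => /eqP.
Qed.

Lemma order_lemma (C : numFieldType) (c : C) (h k0 : {poly C}) :
  h != 0 -> 'X * (1 + c%:P * 'X) * h^`() = k0 * h -> exists p : nat, k0.[0] = p%:R.
Proof.
move=> hn0 E; case: (multiplicity_XsubC h 0) => m [q]; rewrite hn0 /= => qn0 hq.
rewrite subr0 in hq; exists m.
have XdX : 'X * ('X^m)^`() = 'X^m *+ m :> {poly C}.
  case: m {hq} => [|m]; first by rewrite derivXn !mulr0n mulr0.
  by rewrite derivXn /= mulrnAr -exprS.
have Xm0 : 'X^m != 0 :> {poly C} by rewrite expf_neq0 // polyX_eq0.
have : ((1 + c%:P * 'X) * ('X * q^`() + q *+ m)) * 'X^m = (k0 * q) * 'X^m.
  rewrite -[RHS]mulrA -hq -E hq derivM.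
  have e : (q *+ m) * 'X^m = q * ('X * ('X^m)^`()) by rewrite XdX mulrnAl mulrnAr.
  move: e; set Y := 'X^m; set D := Y^`(); set qm := q *+ m => e.
  transitivity ((1 + c%:P * 'X) * ('X * q^`() * Y + qm * Y)); first by ring.
  rewrite e; ring.
move/(mulIf Xm0)/(congr1 (horner^~ 0)); rewrite !hornerE /= (hornerMn m q) -mulr_natl => /mulIf -> //.
Qed.
Lemma irr_X (A : idomainType) (g h : {poly A}) :
  'X = g * h -> g \is a GRing.unit \/ h \is a GRing.unit.
Proof.
move=> e.
have gn0 : g != 0 by apply/eqP=> g0; move: e; rewrite g0 mul0r => /eqP; rewrite polyX_eq0.
have hn0 : h != 0 by apply/eqP=> h0; move: e; rewrite h0 mulr0 => /eqP; rewrite polyX_eq0.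
have hs := size_mul gn0 hn0; rewrite -e size_polyX in hs.
have sg : (0 < size g)%N by rewrite size_poly_gt0.
have sh : (0 < size h)%N by rewrite size_poly_gt0.
have [g1|g1] := eqVneq (size g) 1%N.
  left; rewrite poly_unitE g1 /=; apply/unitrPr; exists h`_1.
  have := congr1 (fun p : {poly A} => p`_1) e.
  by rewrite /= [g in g * h]size1_polyC ?g1 // coefCM coefX.
right; have h1 : size h = 1%N by lia.
rewrite poly_unitE h1 /=; apply/unitrPr; exists g`_1.
have := congr1 (fun p : {poly A} => p`_1) e.
by rewrite /= [h in g * h]size1_polyC ?h1 // mulrC coefCM coefX mulrC.
Qed.

Lemma X_not_unit (A : idomainType) : ('X : {poly A}) \isn't a GRing.unit.
Proof. by rewrite poly_unitE size_polyX. Qed.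

Lemma XC_not_unit (A : idomainType) : (('X : {poly A})%:P) \isn't a GRing.unit.
Proof. by rewrite poly_unitE size_polyC polyX_eq0 /= coefC /= X_not_unit. Qed.

Lemma unit_poly2 (C : fieldType) (p : {poly {poly C}}) :
  p \is a GRing.unit -> exists a, a != 0 /\ p = a%:P%:P.
Proof.
rewrite poly_unitE => /andP [/eqP s1 u0].
move: u0; rewrite poly_unitE => /andP [/eqP s2 u1].
exists (p`_0)`_0; split; first by rewrite -unitfE.
by rewrite -size1_polyC ?s2 // -size1_polyC ?s1.
Qed.

Lemma cst_unit (C : fieldType) (a : C) : a != 0 -> (a%:P%:P : {poly {poly C}}) \is a GRing.unit.
Proof.
move=> an0; rewrite poly_unitE size_polyC polyC_eq0 an0 /= coefC /=.
by rewrite poly_unitE size_polyC an0 /= coefC /= unitfE.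
Qed.

Lemma irr_XC (A : idomainType) (g h : {poly {poly A}}) :
  ('X)%:P = g * h -> g \is a GRing.unit \/ h \is a GRing.unit.
Proof.
move=> e.
have : size (g * h) == 1%N by rewrite -e size_polyC polyX_eq0.
rewrite size_mul_eq1 => /andP [/eqP g1 /eqP h1].
move: e; rewrite (size1_polyC (eq_leq g1)) (size1_polyC (eq_leq h1)) -polyCM.
move/polyC_inj/irr_X => [u|u]; [left|right]; rewrite poly_unitE coefC /=.
  by rewrite -(size1_polyC (eq_leq g1)) g1 u.
by rewrite -(size1_polyC (eq_leq h1)) h1 u.
Qed.
Lemma dx_coef (C : nzRingType) (f : {poly {poly C}}) j : (dx f)`_j = (f`_j)^`().
Proof. by rewrite /dx coef_map_id0 // deriv0. Qed.

Lemma Xdy_coef (C : nzRingType) (f : {poly {poly C}}) j : ('X * dy f)`_j = f`_j *+ j.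
Proof. rewrite coefXM /dy; case: j => [|j] /=; first by rewrite mulr0n. by rewrite coef_deriv. Qed.

Lemma Zfield_dec (R : realType) (c : R) f :
  Zfield c f = ('X * (1 + (c%:C)%:P * 'X))%:P * dx f - 'X * ('X%:P * dx f)
     + ('X - 1)%:P * ('X * dy f).
Proof.
rewrite /Zfield /varx /vary /cst2 !(polyCD, polyCM, polyCN, polyC1, polyCB); ring.
Qed.

Lemma Zfield_coef (R : realType) (c : R) f j :
  (Zfield c f)`_j = 'X * (1 + (c%:C)%:P * 'X) * (f`_j)^`()
     - 'X * (if j == 0%N then 0 else (f`_j.-1)^`()) + ('X - 1) * (f`_j *+ j).
Proof.
rewrite Zfield_dec coefD coefB !coefCM coefXM coefCM Xdy_coef dx_coef.
case: j => [|j] /=; first by rewrite !mulr0n !mulr0 !subr0.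
by rewrite /dx coef_map_id0 ?deriv0.
Qed.
Lemma dx_polyC (C : nzRingType) (p : {poly C}) : dx (p%:P) = (p^`())%:P.
Proof.
apply/polyP => j; rewrite dx_coef !coefC; case: j => [|j] //=; by rewrite deriv0.
Qed.

Lemma dx_X (C : nzRingType) : dx ('X : {poly {poly C}}) = 0.
Proof.
apply/polyP => j; rewrite dx_coef coefX coef0.
by case: (j == 1)%N; rewrite /= ?deriv0 // -polyC1 derivC.
Qed.


Lemma main_case (R : realType) (c : R) (f k : {poly {poly R[i]}}) :
  darboux c f k -> f`_0 != 0 -> (exists j, (f`_j).[0] != 0) -> f \is a GRing.unit.
Proof.
move=> [fn0 hZ] f0n0 [j1 hj1].
have sf : (0 < size f)%N by rewrite size_poly_gt0.
have fz : forall j, (size f <= j)%N -> f`_j = 0 by move=> j hj; rewrite nth_default.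
have hsk : (size k <= 2)%N.
  have hs : (size (k * f)%R <= (size f).+1)%N.
    rewrite -hZ; apply/leq_sizeP => j hj; rewrite Zfield_coef fz; last by lia.
    case: j hj => [|j] hj /=; first by lia.
    rewrite fz; last by lia.
    by rewrite !deriv0 !mul0rn !mulr0 subr0 addr0.
  case: (eqVneq k 0) => [->|kn0]; first by rewrite size_poly0.
  move: hs; rewrite size_mul //; move: (size k) (size f) sf => x y; case: x => [|x] /=; lia.
set k0 := k`_0; set k1 := k`_1.
have hk : k = k0%:P + k1%:P * 'X.
  apply/polyP => i; rewrite coefD coefC coefMX coefC.
  case: i => [|[|i]] /=; rewrite ?addr0 ?add0r //.
  by rewrite nth_default //; apply: leq_trans hsk _.
have E : forall j, 'X * (1 + (c%:C)%:P * 'X) * (f`_j)^`()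
     - 'X * (if j == 0%N then 0 else (f`_j.-1)^`()) + ('X - 1) * (f`_j *+ j)
     = k0 * f`_j + k1 * (if j == 0%N then 0 else f`_j.-1).
  by move=> j; rewrite -Zfield_coef hZ {1}hk mulrDl coefD coefCM -mulrA coefCM coefXM.
set a := fun j => (f`_j).[0].
have Ea : forall j, - (a j *+ j) = k0.[0] * a j + k1.[0] * (if j == 0%N then 0 else a j.-1).
  move=> j; have := congr1 (horner^~ 0) (E j); rewrite /a.
  case: j => [|j] /=; rewrite !hornerE /= ?mulr0n ?oppr0 //.
  by rewrite add0r hornerMn mulN1r.
have key : forall (n : nat) (x kap : R[i]), x != 0 -> - (x *+ n) = kap * x -> kap = - (n%:R).
  move=> n x kap xn0 e; apply: (mulIf xn0); by rewrite /= -e mulNr mulr_natl.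
have exP : exists j, a j != 0 := ex_intro _ j1 hj1.
case: (ex_minnP exP) => j0 hj0 hmin.
have hk0 : k0.[0] = - (j0%:R).
  have := Ea j0; case: j0 hj0 hmin => [|j] hj0 hmin /=.
    by rewrite mulr0 addr0; apply: key.
  case: (eqVneq (a j) 0) => [aj|ajn]; last by have := hmin j ajn; rewrite ltnn.
  by rewrite aj mulr0 addr0; apply: key.
have E0 := E 0%N.
rewrite /= mulr0 subr0 mulr0n mulr0 mulr0 addr0 in E0.
rewrite addr0 in E0.
have [p hp] := @order_lemma _ _ _ _ f0n0 E0.
have kap0 : k0.[0] = 0.
  have : ((p + j0)%:R == 0 :> R[i]) by rewrite natrD -hp hk0 addNr.
  by rewrite pnatr_eq0 addn_eq0 => /andP [/eqP p0 _]; rewrite hp p0.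
have ub : forall i, a i != 0 -> (i <= size f)%N.
  move=> i; rewrite leqNgt; apply: contra => hi.
  by rewrite /a fz ?horner0 // ltnW.
case: (ex_maxnP exP ub) => m hm hmax.
have hb : k1.[0] = 0.
  have := Ea m.+1.
  case: (eqVneq (a m.+1) 0) => [am|amn]; last by have := hmax _ amn; rewrite ltnn.
  rewrite am mulr0 mul0rn oppr0 /= add0r => /esym/eqP.
  by rewrite mulf_eq0 (negbTE hm) orbF => /eqP.
set n := (size f).-1.
have sfn : size f = n.+1 by rewrite /n prednK.
have fnn0 : f`_n != 0 by rewrite -lead_coefE lead_coef_eq0.
have En := E n.+1.
rewrite /= (fz n.+1) ?sfn // deriv0 !mulr0 mul0rn mulr0 sub0r addr0 add0r in En.
have k1z : k1 = 0.
  case: (eqVneq k1 0) => // k1n0; exfalso.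
  have : (size (k1 * f`_n)%R <= size (f`_n)%R)%N.
    rewrite -En size_opp; case: (eqVneq (f`_n)^`() 0) => [->|dn0].
      by rewrite mulr0 size_poly0.
    by rewrite mulrC size_mulX //; exact: lt_size_deriv.
  rewrite size_mul // => hs.
  have sk1 : (size k1 <= 1)%N.
    have : (0 < size (f`_n)%R)%N by rewrite size_poly_gt0.
    move: hs; move: (size k1) (size f`_n) => x y; case: x => [|x] /=; lia.
  move: k1n0; rewrite (size1_polyC sk1) -horner_coef0 hb.
  by rewrite polyC0 eqxx.
move/eqP: En; rewrite k1z mul0r oppr_eq0 mulf_eq0 polyX_eq0 /= => /eqP /deriv_eq0_size sfn1.
have fnC := size1_polyC sfn1.
have an : a n != 0.
  by rewrite /a horner_coef0; apply: contra fnn0 => /eqP h; rewrite fnC h.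
have := Ea n; rewrite kap0 hb !mul0r addr0 => /eqP; rewrite oppr_eq0 mulrn_eq0 (negbTE an) orbF.
move=> /eqP n0.
have fe : f`_0 = f`_n by rewrite n0.
rewrite poly_unitE sfn n0 /= fe poly_unitE.
have -> : size f`_n = 1%N.
  by apply/eqP; rewrite eqn_leq sfn1 size_poly_gt0.
by rewrite /= unitfE; rewrite /a horner_coef0 in an.
Qed.

Lemma dx_varx (C : nzRingType) : dx (varx C) = 1.
Proof. by rewrite /varx dx_polyC derivX polyC1. Qed.
Lemma dy_varx (C : nzRingType) : dy (varx C) = 0.
Proof. by rewrite /varx /dy derivC. Qed.
Lemma dx_vary (C : nzRingType) : dx (vary C) = 0.
Proof. by rewrite /vary dx_X. Qed.
Lemma dy_vary (C : nzRingType) : dy (vary C) = 1.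
Proof. by rewrite /vary /dy derivX. Qed.
Lemma kx_coef (C : nzRingType) (a : C) : (1 - vary C + cst2 a * varx C)`_1 = -1.
Proof. by rewrite coefD coefB coef1 /vary coefX /cst2 /varx -polyCM coefC /= sub0r addr0. Qed.
Lemma ky_coef (C : nzRingType) : ((-1 + varx C)`_0)`_1 = 1.
Proof. by rewrite coefD coefN coef1 /varx coefC /= coefD coefN coef1 coefX /= oppr0 add0r. Qed.

Lemma Zx (R : realType) (c : R) :
  Zfield c (varx R[i]) = (1 - vary R[i] + cst2 (c%:C) * varx R[i]) * varx R[i].
Proof. rewrite /Zfield dx_varx dy_varx. Time ring. Qed.

Lemma Zy (R : realType) (c : R) :
  Zfield c (vary R[i]) = (-1 + varx R[i]) * vary R[i].
Proof. rewrite /Zfield dx_vary dy_vary. Time ring. Qed.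

Lemma kx_n0 (R : realType) (c : R) : (1 - vary R[i] + cst2 (c%:C) * varx R[i]) != 0.
Proof.
apply/eqP => h; have := @kx_coef R[i] (c%:C); rewrite h coef0 => /eqP.
by rewrite eq_sym oppr_eq0 oner_eq0.
Qed.

Lemma ky_n0 (R : realType) : (-1 + varx R[i]) != 0.
Proof.
apply/eqP => h; have := @ky_coef R[i]; rewrite h !coef0 => /eqP.
by rewrite eq_sym oner_eq0.
Qed.

Theorem lemma3p2 (R : realType) (c : R) (hc : 0 <= c) :
  (* x and y are irreducible Darboux polynomials with non-zero cofactors *)
  (irreducible_elt (varx R[i]) /\
     exists k, darboux c (varx R[i]) k /\ k != 0) /\
  (irreducible_elt (vary R[i]) /\
     exists k, darboux c (vary R[i]) k /\ k != 0) /\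
  (* and they are the only ones, up to non-zero scalar multiples *)
  (forall f k : {poly {poly R[i]}},
     irreducible_elt f -> darboux c f k -> k != 0 ->
     exists a : R[i], a != 0 /\
       (f = cst2 a * varx R[i] \/ f = cst2 a * vary R[i])).
Proof.
have Xn0 : varx R[i] != 0 by rewrite /varx polyC_eq0 polyX_eq0.
have Yn0 : vary R[i] != 0 by rewrite /vary polyX_eq0.
split.
  split; first by split; [exact: Xn0 | split; [exact: XC_not_unit | exact: irr_XC]].
  exists (1 - vary R[i] + cst2 (c%:C) * varx R[i]); split; first split => //.
    exact: Zx.
  exact: kx_n0.
split.
  split; first by split; [exact: Yn0 | split; [exact: X_not_unit | exact: irr_X]].
  exists (-1 + varx R[i]); split; first split => //.
    exact: Zy.
  exact: ky_n0.
move=> f k [fn0 [fnu firr]] hD kn0.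
case: (eqVneq f`_0 0) => [f00|f0n0].
  have : root f 0 by rewrite rootE horner_coef0 f00.
  case/factor_theorem => q hq; rewrite polyC0 subr0 in hq.
  case: (firr _ _ hq) => [qu|Xu]; last by move: Xu; rewrite (negbTE (X_not_unit _)).
  have [a [an0 qe]] := @unit_poly2 _ _ qu.
  by exists a; split => //; right; rewrite hq qe /cst2 /vary.
case: (boolP [exists j : 'I_(size f), (f`_j).[0] != 0]) => [/existsP [j hj] | hall].
  by move: fnu; rewrite (@main_case _ _ _ _ hD f0n0 (ex_intro _ (nat_of_ord j) hj)).
have h0 : forall j, (f`_j).[0] = 0.
  move=> j; case: (ltnP j (size f)) => hj.
    by move/existsPn: hall => /(_ (Ordinal hj)) /negPn /eqP.
  by rewrite nth_default // horner0.
set g := map_poly (drop_poly 1) f.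
have hg : f = g * ('X)%:P.
  apply/polyP => j; rewrite coefMC /g coef_map_id0 ?drop_poly0r //.
  apply/polyP => i; rewrite coefMX coef_drop_poly; case: i => [|i] /=.
    by rewrite -horner_coef0 h0.
  by rewrite addn1.
case: (firr _ _ hg) => [gu|Xu]; last by move: Xu; rewrite (negbTE (XC_not_unit _)).
have [a [an0 ge]] := @unit_poly2 _ _ gu.
by exists a; split => //; left; rewrite hg ge /cst2 /varx.
Qed.
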